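(* For $\mathfrak{g}=sl(n)$ with $G=GL(n)$, the Belavin–Drinfeld cohomology $H^1_{BD}(r_{DJ})$ associated to the Drinfeld–Jimbo $r$-matrix is trivial, i.e. every cocycle $X\in GL(n,\overline{\mathbb{K}})$ with $X^{-1}\sigma(X)\in C(r_{DJ})$ for all $\sigma\in\mathrm{Gal}(\overline{\mathbb{K}}/\mathbb{K})$ is of the form $X=QC$ with $Q\in GL(n,\mathbb{K})$ and $C\in C(r_{DJ})$.
   Context: $\mathbb{K}=\mathbb{C}((\hbar))$, $\overline{\mathbb{K}}$ its algebraic closure, Galois group acting entrywise. $GL(n)$ acts on $sl(n)$ by $\mathrm{Ad}_X(a)=XaX^{-1}$. $e_{ik}$ are matrix units, $\Omega=\sum_{i,k}e_{ik}\otimes e_{ki}-\frac1n I\otimes I$, $\Omega_0=\sum_i e_{ii}\otimes e_{ii}-\frac1nI\otimes I$ its Cartan part. The Drinfeld–Jimbo $r$-matrix is $r_{DJ}=\sum_{i<k}e_{ik}\otimes e_{ki}+\frac12\Omega_0$. $C(r)=\{X\in GL(n,\overline{\mathbb{K}}):(\mathrm{Ad}_X\otimes\mathrm{Ad}_X)(r)=r\}$. A cocycle associated to $r$ is $X\in GL(n,\overline{\mathbb{K}})$ with $X^{-1}\sigma(X)\in C(r)$ for all $\sigma$; cocycles $X_1,X_2$ are equivalent if $X_1=QX_2C$ with $Q\in GL(n,\mathbb{K})$, $C\in C(r)$; $H^1_{BD}(r)$ is the set of classes, called trivial if every cocycle is equivalent to the identity. *)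

(* Defs.v *)
From HB Require Import structures.
From mathcomp Require Import all_boot all_order all_algebra all_field.
Set Implicit Arguments. Unset Strict Implicit. Unset Printing Implicit Defensive.
Import Order.TTheory GRing.Theory Num.Theory.
Local Open Scope ring_scope.

(* Elements of gl(n) (x) gl(n), in coordinates w.r.t. the basis
   e_ij (x) e_kl : the coefficient of e_ij (x) e_kl is T (i,j,k,l)
   (index pattern ((i, j), k), l). *)
Notation tensor R n := {ffun 'I_n * 'I_n * 'I_n * 'I_n -> R}.

Definition tens (R : nzRingType) (n : nat) (a b : 'M[R]_n) : tensor R n :=
  [ffun p => a p.1.1.1 p.1.1.2 * b p.1.2 p.2].

Definition tscale (R : nzRingType) (n : nat) (c : R) (T : tensor R n) : tensor R n :=
  [ffun p => c * T p].

Definition Ad (R : comUnitRingType) (n : nat) (X a : 'M[R]_n) : 'M[R]_n :=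
  X *m a *m invmx X.

Definition AdAd (R : comUnitRingType) (n : nat) (X : 'M[R]_n) (T : tensor R n)
  : tensor R n :=
  \sum_(p : 'I_n * 'I_n * 'I_n * 'I_n)
     tscale (T p) (tens (Ad X (delta_mx p.1.1.1 p.1.1.2)) (Ad X (delta_mx p.1.2 p.2))).

Definition Omega0 (F : fieldType) (n : nat) : tensor F n :=
  \sum_(i < n) tens (delta_mx i i) (delta_mx i i)
  - tscale (n%:R)^-1 (tens 1%:M 1%:M).

Definition rDJ (F : fieldType) (n : nat) : tensor F n :=
  \sum_(i < n) \sum_(k < n | (i < k)%N) tens (delta_mx i k) (delta_mx k i)
  + tscale 2^-1 (Omega0 F n).

Definition inC (F : fieldType) (n : nat) (r : tensor F n) (X : 'M[F]_n) : Prop :=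
  X \in unitmx /\ AdAd X r = r.

Definition inGal (L : fieldType) (K : {pred L}) (s : {rmorphism L -> L}) : Prop :=
  bijective s /\ (forall x, x \in K -> s x = x).

Definition inGLK (L : fieldType) (K : {pred L}) (n : nat) (Q : 'M[L]_n) : Prop :=
  Q \in unitmx /\ (forall i j, Q i j \in K).

Definition algebraic_over (L : fieldType) (K : {pred L}) : Prop :=
  forall x : L, exists p : {poly L}, [/\ p != 0, p \is a polyOver K & root p x].

(* Main.v *)
Require Import Defs.
From HB Require Import structures.
From mathcomp Require Import all_boot all_order all_algebra all_field.
From mathcomp Require Import boolp zify ring.
From mathcomp Require classical_sets.
Import GRing.Theory.
Local Open Scope ring_scope.
Set Implicit Arguments. Unset Strict Implicit. Unset Printing Implicit Defensive.

Section Sub.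
Variable L : fieldType.
Implicit Types (F : L -> Prop) (p q g m : {poly L}).

Definition subr F := [/\ F 1, forall x y, F x -> F y -> F (x - y) &
  forall x y, F x -> F y -> F (x * y)].

Definition pov F p := forall i, F p`_i.

Section S.
Variables (F : L -> Prop) (hF : subr F).
Lemma F1 : F 1. Proof. by case: hF. Qed.
Lemma FB x y : F x -> F y -> F (x - y). Proof. by case: hF => _ h _; apply: h. Qed.
Lemma FM x y : F x -> F y -> F (x * y). Proof. by case: hF => _ _ h; apply: h. Qed.
Lemma F0 : F 0. Proof. by rewrite -(subrr 1); apply: FB; apply: F1. Qed.
Lemma FN x : F x -> F (- x). Proof. by move=> hx; rewrite -sub0r; apply: FB => //; apply: F0. Qed.
Lemma FD x y : F x -> F y -> F (x + y).
Proof. by move=> hx hy; rewrite -(opprK y); apply: FB => //; apply: FN. Qed.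
Lemma Fsum (I : Type) (r : seq I) (P : pred I) (G : I -> L) :
  (forall i, P i -> F (G i)) -> F (\sum_(i <- r | P i) G i).
Proof. by move=> h; apply: (big_ind F) => //; [apply: F0 | apply: FD]. Qed.
Lemma FMn x n : F x -> F (x *+ n).
Proof. by move=> hx; elim: n => [|n IH]; [rewrite mulr0n; apply: F0|rewrite mulrS; apply: FD]. Qed.
Lemma Fnat n : F n%:R. Proof. by apply: FMn; apply: F1. Qed.
Lemma FX x n : F x -> F (x ^+ n).
Proof. by move=> hx; elim: n => [|n IH]; [rewrite expr0; apply: F1|rewrite exprS; apply: FM]. Qed.

Lemma pov0 : pov F 0. Proof. by move=> i; rewrite coef0; apply: F0. Qed.
Lemma povC c : F c -> pov F c%:P.
Proof. by move=> hc i; rewrite coefC; case: eqP => _ //; apply: F0. Qed.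
Lemma povD p q : pov F p -> pov F q -> pov F (p + q).
Proof. by move=> hp hq i; rewrite coefD; apply: FD. Qed.
Lemma povN p : pov F p -> pov F (- p).
Proof. by move=> hp i; rewrite coefN; apply: FN. Qed.
Lemma povB p q : pov F p -> pov F q -> pov F (p - q).
Proof. by move=> hp hq i; rewrite coefB; apply: FB. Qed.
Lemma povM p q : pov F p -> pov F q -> pov F (p * q).
Proof. by move=> hp hq i; rewrite coefM; apply: Fsum => j _; apply: FM. Qed.
Lemma povX : pov F 'X.
Proof. by move=> i; rewrite coefX; case: eqP => _; [apply: F1 | apply: F0]. Qed.
Lemma povXn n : pov F 'X^n.
Proof. by move=> i; rewrite coefXn; case: eqP => _; [apply: F1 | apply: F0]. Qed.
Lemma povZ c p : F c -> pov F p -> pov F (c *: p).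
Proof. by move=> hc hp i; rewrite coefZ; apply: FM. Qed.
Lemma povMn p n : pov F p -> pov F (p *+ n).
Proof. by move=> hp i; rewrite coefMn; apply: FMn. Qed.
Lemma povE p n : pov F p -> pov F (p ^+ n).
Proof. by move=> hp; elim: n => [|n IH]; rewrite ?expr0 ?exprS; [apply: povC; apply: F1|apply: povM]. Qed.
Lemma povsum (I : Type) (r : seq I) (P : pred I) (G : I -> {poly L}) :
  (forall i, P i -> pov F (G i)) -> pov F (\sum_(i <- r | P i) G i).
Proof. by move=> h; apply: (big_ind (pov F)) => //; [apply: pov0 | apply: povD]. Qed.
Lemma pov_horner p x : pov F p -> F x -> F p.[x].
Proof.
move=> hp hx; rewrite horner_coef; apply: Fsum => i _; apply: FM => //; exact: FX.
Qed.
Lemma pov_comp p q : pov F p -> pov F q -> pov F (p \Po q).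
Proof.
move=> hp hq; rewrite comp_polyE; apply: povsum => i _; apply: povZ => //; exact: povE.
Qed.
Lemma pov_deriv p : pov F p -> pov F p^`().
Proof. by move=> hp i; rewrite coef_deriv; apply: FMn. Qed.
Lemma pov_lead p : pov F p -> F (lead_coef p). Proof. by move=> hp; apply: hp. Qed.

Lemma size_sub_lt p q : p != 0 -> size p = size q -> lead_coef p = lead_coef q ->
  (size (p - q)%R < size p)%N.
Proof.
move=> p0 sz ld; have sp : (0 < size p)%N by rewrite size_poly_gt0.
rewrite -(prednK sp) ltnS; apply/leq_sizeP => j hj; rewrite coefB.
move: hj; rewrite leq_eqVlt => /orP[/eqP <-|hj].
  by move: ld; rewrite /lead_coef -sz => ->; rewrite subrr.
rewrite !nth_default ?subrr //; first by rewrite -sz -(prednK sp).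
by rewrite -(prednK sp).
Qed.

Lemma pov_div m g : m \is monic -> pov F m -> pov F g ->
  exists h r, [/\ pov F h, pov F r, g = h * m + r & (size r < size m)%N].
Proof.
move=> mm hm; have m0 : m != 0 by apply: monic_neq0.
elim: {g}(size g).+1 {-2}g (ltnSn (size g)) => // N IH g sg hg.
case: (ltnP (size g) (size m)) => [lt|ge].
  by exists 0, g; split => //; [apply: pov0 | rewrite mul0r add0r].
have g0 : g != 0 by rewrite -size_poly_gt0 (leq_trans _ ge) // size_poly_gt0.
set k := (size g - size m)%N.
set t := (lead_coef g *: 'X^k) : {poly L}.
have t0 : t != 0 by rewrite scaler_eq0 lead_coef_eq0 (negbTE g0) /= monic_neq0 ?monicXn.
have szt : size (t * m) = size g.
  rewrite size_Mmonic // size_scale ?lead_coef_eq0 // size_polyXn /k.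
  have sm : (0 < size m)%N by rewrite size_poly_gt0.
  rewrite addSn /= subnK //.
have ldt : lead_coef (t * m) = lead_coef g.
  by rewrite lead_coef_Mmonic // lead_coefZ lead_coefXn mulr1.
have lt : (size (g - t * m)%R < N)%N.
  by apply: (leq_trans (size_sub_lt g0 (esym szt) (esym ldt))); rewrite -ltnS.
have ht : pov F t by apply: povZ; [apply: pov_lead | apply: povXn].
have [h [r [hh hr e sr]]] := IH _ lt (povB hg (povM ht hm)).
exists (h + t), r; split => //; first by apply: povD.
by rewrite mulrDl -addrA [t * m + r]addrC addrA -e subrK.
Qed.
End S.
End Sub.

Section Hom.
Variable L : fieldType.
Implicit Types (F : L -> Prop) (p q g m : {poly L}).

Definition phom F (f : L -> L) := [/\ f 1 = 1, forall x y, F x -> F y -> f (x - y) = f x - f y &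
  forall x y, F x -> F y -> f (x * y) = f x * f y].

Section H.
Variables (F : L -> Prop) (hF : subr F) (f : L -> L) (hf : phom F f).
Lemma f1 : f 1 = 1. Proof. by case: hf. Qed.
Lemma fB x y : F x -> F y -> f (x - y) = f x - f y. Proof. by case: hf => _ h _; apply: h. Qed.
Lemma fM x y : F x -> F y -> f (x * y) = f x * f y. Proof. by case: hf => _ _ h; apply: h. Qed.
Lemma f0 : f 0 = 0. Proof. by rewrite -(subrr 1) fB ?subrr //; apply: F1. Qed.
Lemma fN x : F x -> f (- x) = - f x.
Proof. by move=> hx; rewrite -sub0r fB ?f0 ?sub0r //; apply: F0. Qed.
Lemma fD x y : F x -> F y -> f (x + y) = f x + f y.
Proof. by move=> hx hy; rewrite -(opprK y) fB ?fN ?opprK //; apply: FN. Qed.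
Lemma fsum (I : Type) (r : seq I) (P : pred I) (G : I -> L) :
  (forall i, P i -> F (G i)) -> f (\sum_(i <- r | P i) G i) = \sum_(i <- r | P i) f (G i).
Proof.
move=> h; elim: r => [|i r IH]; first by rewrite !big_nil f0.
rewrite !big_cons; case: (boolP (P i)) => Pi //.
by rewrite fD ?IH //; [apply: h | apply: Fsum].
Qed.
Lemma fX x n : F x -> f (x ^+ n) = f x ^+ n.
Proof.
move=> hx; elim: n => [|n IH]; first by rewrite !expr0 f1.
by rewrite !exprS fM ?IH //; apply: FX.
Qed.

Definition pm p := map_poly f p.
Lemma pmE p i : (pm p)`_i = f p`_i. Proof. by rewrite coef_map_id0 // f0. Qed.
Lemma pmB p q : pov F p -> pov F q -> pm (p - q) = pm p - pm q.
Proof. by move=> hp hq; apply/polyP => i; rewrite coefB !pmE coefB fB. Qed.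
Lemma pmM p q : pov F p -> pov F q -> pm (p * q) = pm p * pm q.
Proof.
move=> hp hq; apply/polyP => i; rewrite !coefM pmE coefM fsum.
  by apply: eq_bigr => j _; rewrite fM // !pmE.
by move=> j _; apply: FM.
Qed.
Lemma pmC c : pm c%:P = (f c)%:P.
Proof. by apply/polyP => i; rewrite pmE !coefC; case: eqP => // _; rewrite f0. Qed.
Lemma pmX : pm 'X = 'X.
Proof. by apply/polyP => i; rewrite pmE !coefX; case: eqP => _; rewrite ?f1 ?f0. Qed.
Lemma size_pm p : (size (pm p) <= size p)%N. Proof. exact: size_poly. Qed.
Lemma pm_horner p x : pov F p -> F x -> (pm p).[f x] = f p.[x].
Proof.
move=> hp hx; rewrite (horner_coef_wide _ (size_pm p)) horner_coef fsum.
  by apply: eq_bigr => i _; rewrite pmE fM ?fX //; apply: FX.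
by move=> i _; apply: FM => //; apply: FX.
Qed.
Lemma pm_monic p : p \is monic -> pov F p -> size (pm p) = size p /\ pm p \is monic.
Proof.
move=> /monicP mp hp.
have e : size (pm p) = size p by apply: size_map_poly_id0; rewrite mp f1 oner_neq0.
split => //; apply/monicP; rewrite /lead_coef e pmE.
by move: mp; rewrite /lead_coef => ->; apply: f1.
Qed.
End H.

Definition subf F := subr F /\ forall x, F x -> F x^-1.

Lemma minpoly F a : subf F -> (exists p, [/\ p != 0, pov F p & root p a]) ->
  exists mp, [/\ mp \is monic, pov F mp, root mp a &
    forall g, pov F g -> root g a -> exists h, pov F h /\ g = h * mp].
Proof.
move=> [hF hI] ex.
pose P := fun N => `[< exists p, [/\ p != 0, pov F p, root p a & size p = N] >].
have exP : exists N, P N.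
  by case: ex => p [p0 hp rp]; exists (size p); apply/asboolP; exists p.
case: (ex_minnP exP) => N /asboolP [p [p0 hp rp sp]] minN.
have l0 : lead_coef p != 0 by rewrite lead_coef_eq0.
pose mp := (lead_coef p)^-1 *: p.
have mpm : mp \is monic by apply/monicP; rewrite lead_coefZ mulVf.
have hmp : pov F mp by apply: povZ => //; apply: hI; apply: pov_lead.
have rmp : root mp a by rewrite /root hornerZ (eqP rp) mulr0.
have smp : size mp = N by rewrite size_scale ?invr_eq0.
exists mp; split => // g hg rg.
have [h [r [hh hr e sr]]] := pov_div hF mpm hmp hg.
exists h; split => //.
case: (eqVneq r 0) => [r0|r0]; first by rewrite e r0 addr0.
exfalso; have rr : root r a.
  by move: rg; rewrite /root e hornerD hornerM (eqP rmp) mulr0 add0r.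
have : (N <= size r)%N by apply: minN; apply/asboolP; exists r.
by rewrite -smp leqNgt sr.
Qed.

Lemma ext F f a b : subr F -> phom F f ->
  (forall g, pov F g -> root g a -> root (pm f g) b) ->
  exists F' f', [/\ subr F', phom F' f', (forall x, F x -> F' x /\ f' x = f x),
     F' a & f' a = b].
Proof.
move=> hF hf hb.
pose F' := fun x => exists g, pov F g /\ x = g.[a].
pose f' := fun x => match pselect (F' x) with
   | left h => (pm f (proj1_sig (cid h))).[b] | right _ => x end.
have wd : forall g, pov F g -> f' g.[a] = (pm f g).[b].
  move=> g hg; rewrite /f'; case: pselect => [h|[]]; last by exists g.
  case: (cid h) => g' /= [hg' e]; apply/eqP; rewrite -subr_eq0 -hornerN -hornerD.
  rewrite -[_ - _]/(pm f g' - pm f g) -(pmB hF hf) //; apply: hb; first by apply: povB.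
  by rewrite /root hornerD hornerN e subrr.
have FF' : forall x, F x -> F' x /\ f' x = f x.
  move=> x hx; have e : x = (x%:P).[a] by rewrite hornerC.
  split; first by exists x%:P; split => //; apply: povC.
  by rewrite e wd ?(pmC hF hf) ?hornerC //; apply: povC.
exists F', f'; split => //.
- split; first by apply: (FF' _ (F1 hF)).1.
  + by move=> x y [g [hg ->]] [g' [hg' ->]]; exists (g - g'); split; [apply: povB|rewrite hornerD hornerN].
  + by move=> x y [g [hg ->]] [g' [hg' ->]]; exists (g * g'); split; [apply: povM|rewrite hornerM].
- split; first by rewrite (FF' _ (F1 hF)).2 (f1 hf).
  + move=> x y [g [hg ->]] [g' [hg' ->]].
    by rewrite -hornerN -hornerD (wd _ (povB hF hg hg')) (pmB hF hf) // hornerD hornerN !wd.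
  + move=> x y [g [hg ->]] [g' [hg' ->]].
    by rewrite -hornerM (wd _ (povM hF hg hg')) (pmM hF hf) // hornerM !wd.
- by exists 'X; split; [apply: povX | rewrite hornerX].
- have e : a = 'X.[a] by rewrite hornerX.
  by rewrite e wd ?(pmX hF hf) ?hornerX //; apply: povX.
Qed.
End Hom.

Section Gal.
Variables (L : closedFieldType) (K : {pred L}) (Kf : GRing.divring_closed K)
  (char0 : [pchar L] =i pred0)
  (Kalg : forall x : L, exists p : {poly L}, [/\ p != 0, p \is a polyOver K & root p x]).

Let Kp := fun x => x \in K.

Lemma subfK : subf Kp.
Proof.
case: Kf => K1 KB KD.
have hI : forall x, Kp x -> Kp x^-1 by move=> x hx; rewrite /Kp -div1r; apply: (KD 1).
split => //; split => //.
by move=> x y hx hy; rewrite -[y]invrK; apply: (KD x) => //; apply: hI.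
Qed.
Let subrK : subr Kp. Proof. exact: subfK.1. Qed.

Lemma algF F a : (forall x, Kp x -> F x) -> exists p, [/\ p != 0, pov F p & root p a].
Proof.
move=> hK; case: (Kalg a) => p [p0 hp rp]; exists p; split => //.
have /allP hp' : all (mem K) p := hp.
move=> i; apply: hK; case: (ltnP i (size p)) => hi.
  by apply: (hp' (p`_i)); apply: mem_nth.
by rewrite nth_default //; apply: (F0 subrK).
Qed.

Lemma minpolyK a : exists mp, [/\ mp \is monic, pov Kp mp, root mp a &
    forall g, pov Kp g -> root g a -> exists h, pov Kp h /\ g = h * mp].
Proof. by apply: minpoly; [apply: subfK | apply: algF]. Qed.

Lemma INV x : exists h, pov Kp h /\ x^-1 = h.[x].
Proof.
case: (eqVneq x 0) => [->|x0].
  by exists 0; split; [apply: pov0 | rewrite invr0 horner0].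
have [mp [mm hmp rmp dvd]] := minpolyK x.
set c := mp`_0; set q := drop_poly 1 mp.
have e : mp = c%:P + q * 'X.
  rewrite -{1}(poly_take_drop 1 mp) expr1; congr (_ + _).
  by apply/polyP => i; rewrite coef_take_poly coefC; case: i.
have hq : pov Kp q by move=> i; rewrite coef_drop_poly; apply: hmp.
have ev : c + q.[x] * x = 0.
  by move: rmp; rewrite /root {1}e hornerD hornerM hornerC hornerX => /eqP.
case: (eqVneq c 0) => [c0|c0].
  exfalso; move: ev; rewrite c0 add0r => /eqP; rewrite mulf_eq0 (negbTE x0) orbF => rq.
  have [h [hh eq]] := dvd q hq rq.
  have m0 : mp != 0 by apply: monic_neq0.
  have q0 : q != 0 by apply: contra m0 => /eqP q0; rewrite e q0 c0 mul0r addr0.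
  have h0 : h != 0 by apply: contra q0 => /eqP h0; rewrite eq h0 mul0r.
  have s2 : size q = (size h + size mp).-1 by rewrite eq size_mul.
  have s1 : size q = (size mp - 1)%N by rewrite size_drop_poly.
  have hpos : (0 < size h)%N by rewrite size_poly_gt0.
  have sm : (0 < size mp)%N by rewrite size_poly_gt0.
  lia.
exists ((- c)^-1 *: q); split; first by apply: (povZ subrK) => //; apply: subfK.2; apply: (FN subrK); apply: hmp.
rewrite hornerZ; have -> : q.[x] = - c * x^-1.
  by apply: (mulIf x0); rewrite -mulrA mulVf // mulr1; apply/eqP; rewrite -addr_eq0 addrC ev.
by rewrite mulrA mulVf ?mul1r // oppr_eq0.
Qed.

Lemma subr_subf F : subr F -> (forall x, Kp x -> F x) -> subf F.
Proof.
move=> hF hK; split => // x hx; have [h [hh ->]] := INV x.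
apply: pov_horner => // i; apply: hK; apply: hh.
Qed.

End Gal.

Section Zorn.
Variables (L : closedFieldType) (K : {pred L}) (Kf : GRing.divring_closed K)
  (char0 : [pchar L] =i pred0)
  (Kalg : forall x : L, exists p : {poly L}, [/\ p != 0, p \is a polyOver K & root p x]).
Variables (y0 z0 : L) (hyz : forall g, pov (fun x => x \in K) g -> root g y0 -> root g z0).

Let Kp := fun x => x \in K.

Definition PE (F : L -> Prop) (f : L -> L) :=
  [/\ subr F, (forall x, Kp x -> F x), (forall x, Kp x -> f x = x) & phom F f].
Definition Inv (pf : (L -> Prop) * (L -> L)) := PE pf.1 pf.2 /\ pf.1 y0 /\ pf.2 y0 = z0.
Definition TT := {pf : (L -> Prop) * (L -> L) | Inv pf}.
Definition Fof (s : TT) := (proj1_sig s).1.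
Definition fof (s : TT) := (proj1_sig s).2.
Lemma Invof (s : TT) : PE (Fof s) (fof s) /\ Fof s y0 /\ fof s y0 = z0.
Proof. exact: (proj2_sig s). Qed.
Definition Rel (s t : TT) := forall x, Fof s x -> Fof t x /\ fof t x = fof s x.
Definition RR : rel TT := fun s t => `[< Rel s t >].

Lemma t0_ex : exists t : TT, True.
Proof.
have hK : subr Kp by exact: (subfK Kf).1.
have hid : phom Kp id by split.
have hb : forall g, pov Kp g -> root g y0 -> root (pm id g) z0.
  by move=> g hg rg; rewrite /pm map_poly_id //; apply: hyz.
have [F' [f' [hF' hf' ext' Fy fy]]] := ext hK hid hb.
have pe : Inv (F', f').
  split; last by split.
  split => // x hx; [exact: (ext' x hx).1 | exact: (ext' x hx).2].
by exists (exist _ _ pe).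
Qed.

Lemma chain_ub (A : TT -> Prop) (t0 : TT) : classical_sets.total_on A RR ->
  exists t, forall s, A s -> RR s t.
Proof.
move=> tot.
case: (pselect (exists s, A s)) => [[s0 As0]|none]; last first.
  by exists t0 => s As; exfalso; apply: none; exists s.
have common : forall s t, A s -> A t -> exists u, [/\ A u, Rel s u & Rel t u].
  move=> s t As At; case: (tot s t As At) => /asboolP h.
    by exists t; split => // x hx.
  by exists s; split => // x hx.
pose U := fun x => exists s, A s /\ Fof s x.
pose fU := fun x => match pselect (U x) with
  | left h => fof (proj1_sig (cid h)) x | right _ => x end.
have agree : forall s x, A s -> Fof s x -> fU x = fof s x.
  move=> s x As hx; rewrite /fU; case: pselect => [h|[]]; last by exists s.
  case: (cid h) => s' [As' hx'] /=.
  case: (tot s s' As As') => /asboolP h1; first by rewrite (h1 x hx).2.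
  by rewrite (h1 x hx').2.
have [[hF0 KF0 fK0 hf0] [Fy0 fy0]] := Invof s0.
have two : forall x y, U x -> U y -> exists u, [/\ A u, Fof u x & Fof u y].
  move=> x y [s [As hx]] [t [At hy]]; have [u [Au ru tu]] := common s t As At.
  by exists u; split => //; [exact: (ru x hx).1 | exact: (tu y hy).1].
have peU : PE U fU.
  split.
  - split; first by exists s0; split => //; apply: (F1 hF0).
    + move=> x y hx hy; have [u [Au hxu hyu]] := two x y hx hy.
      have [[hFu _ _ _] _] := Invof u.
      by exists u; split => //; apply: FB.
    + move=> x y hx hy; have [u [Au hxu hyu]] := two x y hx hy.
      have [[hFu _ _ _] _] := Invof u.
      by exists u; split => //; apply: FM.
  - by move=> x hx; exists s0; split => //; apply: KF0.
  - by move=> x hx; rewrite (agree s0) ?fK0 //; apply: KF0.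
  - split.
    + by rewrite (agree s0 1) ?(f1 hf0) //; apply: (F1 hF0).
    + move=> x y hx hy; have [u [Au hxu hyu]] := two x y hx hy.
      have [[hFu _ _ hfu] _] := Invof u.
      by rewrite (agree u (x - y) Au (FB hFu hxu hyu)) (agree u x Au hxu) (agree u y Au hyu) (fB hfu).
    + move=> x y hx hy; have [u [Au hxu hyu]] := two x y hx hy.
      have [[hFu _ _ hfu] _] := Invof u.
      by rewrite (agree u (x * y) Au (FM hFu hxu hyu)) (agree u x Au hxu) (agree u y Au hyu) (fM hfu).
have invU : Inv (U, fU).
  split => //; split => /=; first by exists s0.
  by rewrite (agree s0).
exists (exist _ _ invU) => s As; apply/asboolP => x hx; split.
  by exists s.
by rewrite /fof /= (agree s).
Qed.

Lemma total_emb : exists f : L -> L, [/\ phom (fun _ => True) f,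
  (forall x, x \in K -> f x = x) & f y0 = z0].
Proof.
have [t0 _] := t0_ex.
have [| | |t tmax] := @classical_sets.ZL_preorder TT t0 RR.
- by move=> t; apply/asboolP => x hx.
- move=> r s t /asboolP h1 /asboolP h2; apply/asboolP => x hx.
  have [a1 a2] := h1 x hx; have [b1 b2] := h2 x a1; split => //; by rewrite b2.
- by move=> A tot; apply: chain_ub.
have [[hF KF fK hf] [Fy fy]] := Invof t.
have full : forall a, Fof t a.
  move=> a.
  have sf : subf (Fof t) by apply: (subr_subf Kf).
  have [mp [mm hmp rmp dvd]] := minpoly sf (algF Kf Kalg a KF).
  have [szq mq] := pm_monic hF hf mm hmp.
  have s1 : size (pm (fof t) mp) != 1%N.
    rewrite szq; apply/negP => s1; move: rmp.
    by case/size_poly1P: s1 => c c0 ->; rewrite /root hornerC (negbTE c0).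
  have [b rb] := closed_rootP _ s1.
  have hb : forall g, pov (Fof t) g -> root g a -> root (pm (fof t) g) b.
    move=> g hg rg; have [h [hh ->]] := dvd g hg rg.
    by rewrite (pmM hF hf) // /root hornerM (eqP rb) mulr0.
  have [F' [f' [hF' hf' ext' Fa fa]]] := ext hF hf hb.
  have pe : Inv (F', f').
    split; last by split; [exact: (ext' _ Fy).1 | rewrite /= (ext' _ Fy).2].
    split => // x hx; first exact: (ext' x (KF x hx)).1.
    by rewrite /= (ext' x (KF x hx)).2 fK.
  have Rts : RR t (exist _ _ pe) by apply/asboolP => x hx; exact: ext' x hx.
  by have /asboolP h := tmax _ Rts; exact: (h a Fa).1.
exists (fof t); split => //.
split; first exact: (f1 hf).
  by move=> x y _ _; apply: (fB hf).
by move=> x y _ _; apply: (fM hf).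
Qed.
End Zorn.

Section RM.
Variables (L : fieldType) (f : L -> L) (Hz : zmod_morphism f) (Hm : monoid_morphism f).
Definition rmf := f.
HB.instance Definition _ := GRing.isZmodMorphism.Build L L rmf Hz.
HB.instance Definition _ := GRing.isMonoidMorphism.Build L L rmf Hm.
Definition rmf' : {rmorphism L -> L} := rmf.
End RM.

Section Fix.
Variables (L : closedFieldType) (K : {pred L}) (Kf : GRing.divring_closed K)
  (char0 : [pchar L] =i pred0)
  (Kalg : forall x : L, exists p : {poly L}, [/\ p != 0, p \is a polyOver K & root p x]).
Let Kp := fun x => x \in K.
Let subrK : subr Kp. Proof. exact: (subfK Kf).1. Qed.

Let TT : subr (fun _ : L => True). Proof. by split. Qed.

Lemma emb_bij f : phom (fun _ => True) f -> (forall x, x \in K -> f x = x) -> bijective f.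
Proof.
move=> hf fK.
have inj : injective f.
  move=> x y e; apply/eqP; rewrite -subr_eq0; apply/negPn/negP => u0.
  have : f ((x - y) * (x - y)^-1) = 0 by rewrite (fM hf) // (fB hf) // e subrr mul0r.
  by rewrite mulfV // (f1 hf); apply/eqP; rewrite oner_eq0.
have surj : forall w, exists r, w = f r.
  move=> w; have [mp [mm hmp rmp _]] := minpolyK Kf Kalg w.
  have [rs ers] := closed_field_poly_normal mp.
  move: ers; rewrite (monicP mm) scale1r => ers.
  have rootE u : root mp u = (u \in rs) by rewrite ers root_prod_XsubC.
  have pmK : pm f mp = mp by apply/polyP => i; rewrite (pmE TT hf) fK //; apply: hmp.
  have rootf : forall r, r \in rs -> f r \in rs.
    move=> r hr; rewrite -rootE /root -pmK (pm_horner TT hf) //.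
    by rewrite -rootE in hr; rewrite (eqP hr) (f0 TT hf).
  set s := undup rs.
  have us : uniq (map f s) by rewrite map_inj_uniq // undup_uniq.
  have sub : {subset map f s <= s}.
    by move=> v /mapP [r hr ->]; rewrite mem_undup; apply: rootf; rewrite -mem_undup.
  have sz : (size s <= size (map f s))%N by rewrite size_map.
  have [_ eqs] := uniq_min_size us sub sz.
  have : w \in map f s by rewrite eqs mem_undup -rootE.
  by case/mapP => r _ ->; exists r.
pose g := fun w => proj1_sig (cid (surj w)).
exists g => x.
  by rewrite /g; case: (cid _) => r /= e; apply: inj.
by rewrite /g; case: (cid _) => r /= e.
Qed.

Lemma conj_ex y : y \notin K -> exists z, z != y /\
  forall g, pov Kp g -> root g y -> root g z.
Proof.
move=> yK; have [mp [mm hmp rmp dvd]] := minpolyK Kf Kalg y.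
have [h eh] := sig_eqW (factor_theorem _ _ rmp).
have m0 : mp != 0 by apply: monic_neq0.
have h0 : h != 0 by apply: contra m0 => /eqP h0; rewrite eh h0 mul0r.
have sh : size h != 1%N.
  apply/negP => /size_poly1P [c c0 ehc].
  have c1 : c = 1.
    by move: (monicP mm); rewrite eh ehc lead_coef_Mmonic ?monicXsubC // lead_coefC.
  move: (hmp 0%N); rewrite eh ehc c1 mul1r coefB coefX coefC /= sub0r.
  by move=> hy; apply: (negP yK); rewrite -[y]opprK; apply: (FN subrK).
case: (eqVneq h.[y] 0) => hy.
  exfalso.
  have dmp : mp^`() = h^`() * ('X - y%:P) + h.
    by rewrite eh derivM derivXsubC mulr1.
  have rd : root mp^`() y by rewrite /root dmp hornerD hornerM hornerXsubC subrr mulr0 add0r hy.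
  have [h2 [_ e2]] := dvd _ (pov_deriv subrK hmp) rd.
  have szm : (2 <= size mp)%N.
    rewrite eh size_Mmonic ?monicXsubC // size_XsubC addn2 /=.
    by move: h0 sh; rewrite -size_poly_gt0; case: (size h) => [|[|k]].
  have d0 : mp^`() != 0.
    apply/eqP => /polyP /(_ (size mp - 2)%N); rewrite coef_deriv coef0.
    have -> : (size mp - 2).+1 = (size mp).-1 by lia.
    rewrite -/(lead_coef mp) (monicP mm).
    move/eqP; rewrite -[1 *+ _]/((_)%:R) (pcharf0P _).1 //; lia.
  have ltd := lt_size_deriv m0.
  have h20 : h2 != 0 by apply: contra d0 => /eqP h20; rewrite e2 h20 mul0r.
  move: ltd; rewrite e2 size_mul // -subn1; rewrite -size_poly_gt0 in h20; move: h20; set a := size h2; set b := size mp; move=> h20 H; clearbody a b; lia.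
have [z rz] := closed_rootP _ sh.
exists z; split.
  by apply/eqP => ezy; move: hy; rewrite -ezy (eqP rz) eqxx.
move=> g hg rg; have [h' [_ ->]] := dvd g hg rg.
by rewrite /root hornerM eh hornerM (eqP rz) mul0r mulr0.
Qed.

Lemma FIX y : (forall s : {rmorphism L -> L}, inGal K s -> s y = y) -> y \in K.
Proof.
move=> hs; apply/negPn/negP => yK.
have [z [zy hyz]] := conj_ex yK.
have [f [hf fK fy]] := total_emb Kf Kalg hyz.
have Hz : zmod_morphism f by move=> a b; apply: (fB hf).
have Hm : monoid_morphism f by split; [apply: (f1 hf) | move=> a b; apply: (fM hf)].
have := hs (rmf' Hz Hm) (conj (emb_bij hf fK) fK).
by rewrite /= /rmf fy => ezy; move: zy; rewrite ezy eqxx.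
Qed.
End Fix.

Section Ten.
Variables (R : fieldType) (n : nat).
Implicit Types (C A B : 'M[R]_n) (T : tensor R n).

Definition Lf C T (a c m q : 'I_n) :=
  \sum_(b < n) \sum_(d < n) T (a, b, c, d) * C b m * C d q.
Definition Rf C T (a c m q : 'I_n) :=
  \sum_(i < n) \sum_(k < n) C a i * C c k * T (i, m, k, q).

Lemma deltaE (i j a b : 'I_n) : delta_mx i j a b = ((a == i) && (b == j))%:R :> R.
Proof. by rewrite mxE. Qed.

Lemma sum_delta (G : 'I_n -> R) (c : 'I_n) (P : pred 'I_n) :
  \sum_(k < n | P k) (c == k)%:R * G k = (P c)%:R * G c.
Proof.
rewrite big_mkcond (bigD1 c) //= big1 ?addr0.
  by rewrite eqxx; case: (P c); rewrite /= ?mulr1n ?mulr0n ?mul1r ?mul0r.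
by move=> k /negbTE ck; rewrite eq_sym ck; case: (P k); rewrite /= ?mulr0n ?mul0r.
Qed.

Lemma Lf_add T1 T2 C a c m q : Lf C (T1 + T2) a c m q = Lf C T1 a c m q + Lf C T2 a c m q.
Proof.
rewrite /Lf -big_split; apply: eq_bigr => b _; rewrite -big_split; apply: eq_bigr => d _.
by rewrite ffunE !mulrDl.
Qed.
Lemma Rf_add T1 T2 C a c m q : Rf C (T1 + T2) a c m q = Rf C T1 a c m q + Rf C T2 a c m q.
Proof.
rewrite /Rf -big_split; apply: eq_bigr => b _; rewrite -big_split; apply: eq_bigr => d _.
by rewrite ffunE !mulrDr.
Qed.
Lemma sum_deltar (G : 'I_n -> R) (b : 'I_n) : \sum_(b' < n) G b' * (b' == b)%:R = G b.
Proof.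
have := sum_delta G b predT; rewrite /= mul1r => <-.
by apply: eq_bigr => k _; rewrite mulrC eq_sym.
Qed.
Lemma Lf0 C a c m q : Lf C 0 a c m q = 0.
Proof. by rewrite /Lf big1 // => b _; rewrite big1 // => d _; rewrite ffunE !mul0r. Qed.
Lemma Rf0 C a c m q : Rf C 0 a c m q = 0.
Proof. by rewrite /Rf big1 // => b _; rewrite big1 // => d _; rewrite ffunE !mulr0. Qed.
Lemma Lf_sumP (I : Type) (r : seq I) (P : pred I) (G : I -> tensor R n) C a c m q :
  Lf C (\sum_(i <- r | P i) G i) a c m q = \sum_(i <- r | P i) Lf C (G i) a c m q.
Proof. exact: (big_morph (fun T => Lf C T a c m q) (fun T1 T2 => Lf_add T1 T2 C a c m q) (Lf0 C a c m q)). Qed.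
Lemma Rf_sumP (I : Type) (r : seq I) (P : pred I) (G : I -> tensor R n) C a c m q :
  Rf C (\sum_(i <- r | P i) G i) a c m q = \sum_(i <- r | P i) Rf C (G i) a c m q.
Proof. exact: (big_morph (fun T => Rf C T a c m q) (fun T1 T2 => Rf_add T1 T2 C a c m q) (Rf0 C a c m q)). Qed.
Lemma Lf_scale x T C a c m q : Lf C (tscale x T) a c m q = x * Lf C T a c m q.
Proof.
rewrite /Lf mulr_sumr; apply: eq_bigr => b _; rewrite mulr_sumr; apply: eq_bigr => d _.
by rewrite ffunE !mulrA.
Qed.
Lemma Rf_scale x T C a c m q : Rf C (tscale x T) a c m q = x * Rf C T a c m q.
Proof.
rewrite /Rf mulr_sumr; apply: eq_bigr => b _; rewrite mulr_sumr; apply: eq_bigr => d _.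
by rewrite ffunE; ring.
Qed.
Lemma Lf_sub T1 T2 C a c m q : Lf C (T1 - T2) a c m q = Lf C T1 a c m q - Lf C T2 a c m q.
Proof.
rewrite /Lf -sumrB; apply: eq_bigr => b _; rewrite -sumrB; apply: eq_bigr => d _.
by rewrite !ffunE; ring.
Qed.
Lemma Rf_sub T1 T2 C a c m q : Rf C (T1 - T2) a c m q = Rf C T1 a c m q - Rf C T2 a c m q.
Proof.
rewrite /Rf -sumrB; apply: eq_bigr => b _; rewrite -sumrB; apply: eq_bigr => d _.
by rewrite !ffunE; ring.
Qed.
Lemma Lf_tens A B C a c m q : Lf C (tens A B) a c m q = (A *m C) a m * (B *m C) c q.
Proof.
rewrite !mxE big_distrl; apply: eq_bigr => b _; rewrite big_distrr; apply: eq_bigr => d _.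
by rewrite ffunE /=; ring.
Qed.
Lemma Rf_tens A B C a c m q : Rf C (tens A B) a c m q = (C *m A) a m * (C *m B) c q.
Proof.
rewrite !mxE big_distrl; apply: eq_bigr => b _; rewrite big_distrr; apply: eq_bigr => d _.
by rewrite ffunE /=; ring.
Qed.

Lemma decomp T : T = \sum_(p : 'I_n * 'I_n * 'I_n * 'I_n)
  tscale (T p) (tens (delta_mx p.1.1.1 p.1.1.2) (delta_mx p.1.2 p.2)).
Proof.
apply/ffunP => x; rewrite sum_ffunE (bigD1 x) //= big1 ?addr0.
  by rewrite !ffunE !deltaE !eqxx /= !mulr1.
case: x => [[[a b] c] d] [[[i j] k] l] /= ne.
rewrite !ffunE !deltaE /=.
case: (eqVneq a i) => [ai|_]; last by rewrite /= !(mul0r, mulr0).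
case: (eqVneq b j) => [bj|_]; last by rewrite /= !(mul0r, mulr0).
case: (eqVneq c k) => [ck|_]; last by rewrite /= !(mul0r, mulr0).
case: (eqVneq d l) => [dl|_]; last by rewrite /= !(mul0r, mulr0).
by move: ne; rewrite ai bj ck dl eqxx.
Qed.

Lemma Lf_AdAd C T a c m q : C \in unitmx -> Lf C (AdAd C T) a c m q = Rf C T a c m q.
Proof.
move=> Cu; rewrite /AdAd Lf_sumP [in RHS](decomp T) Rf_sumP; apply: eq_bigr => p _.
by rewrite Lf_scale Rf_scale Lf_tens Rf_tens /Ad !mulmxKV.
Qed.

Lemma Lf_inj C T1 T2 : C \in unitmx ->
  (forall a c m q, Lf C T1 a c m q = Lf C T2 a c m q) -> T1 = T2.
Proof.
move=> Cu h.
suff key : forall T a b c d, T (a, b, c, d) =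
    \sum_(m < n) \sum_(q < n) Lf C T a c m q * invmx C m b * invmx C q d.
  by apply/ffunP => [[[[a b] c] d]]; rewrite key [RHS]key; do 2 (apply: eq_bigr => ? _); rewrite h.
move=> T a b c d.
have e : forall x y : 'I_n, \sum_(m < n) C x m * invmx C m y = (x == y)%:R.
  by move=> x y; move: (mulmxV Cu) => /(congr1 (fun M : 'M[R]_n => M x y)); rewrite !mxE.
transitivity (\sum_(b' < n) \sum_(d' < n) T (a, b', c, d') * (b' == b)%:R * (d' == d)%:R).
  under eq_bigr => b' _ do rewrite (sum_deltar (fun d' => T (a, b', c, d') * (b' == b)%:R)).
  by rewrite (sum_deltar (fun b' => T (a, b', c, d))).
transitivity (\sum_(b' < n) \sum_(d' < n) \sum_(m < n) \sum_(q < n)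
   T (a, b', c, d') * C b' m * C d' q * invmx C m b * invmx C q d).
  apply: eq_bigr => b' _; apply: eq_bigr => d' _.
  rewrite -e -e big_distrr /= [RHS]exchange_big /=; apply: eq_bigr => q _.
  rewrite mulr_sumr mulr_suml; apply: eq_bigr => m _; ring.
rewrite /Lf.
under eq_bigr => b' _ do rewrite exchange_big /=.
rewrite exchange_big /=; apply: eq_bigr => m _.
under eq_bigr => b' _ do rewrite exchange_big /=.
rewrite exchange_big /=; apply: eq_bigr => q _.
rewrite !mulr_suml; apply: eq_bigr => b' _; rewrite !mulr_suml; apply: eq_bigr => d' _.
by [].
Qed.

Lemma inC_iff C T : C \in unitmx ->
  (AdAd C T = T <-> forall a c m q, Lf C T a c m q = Rf C T a c m q).
Proof.
move=> Cu; split.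
  by move=> e a c m q; rewrite -{1}e Lf_AdAd.
move=> h; apply: (Lf_inj Cu) => a c m q; rewrite Lf_AdAd //.
Qed.

End Ten.

Section R.
Variables (R : fieldType) (n : nat).
Implicit Types (C : 'M[R]_n).

Lemma dmul (i k a m : 'I_n) C : (delta_mx i k *m C) a m = (a == i)%:R * C k m.
Proof.
rewrite mxE (bigD1 k) //= big1 ?addr0.
  by rewrite deltaE eqxx andbT.
by move=> j /negbTE jk; rewrite deltaE jk andbF /= mul0r.
Qed.
Lemma muld (i k a m : 'I_n) C : (C *m delta_mx i k) a m = C a i * (m == k)%:R.
Proof.
rewrite mxE (bigD1 i) //= big1 ?addr0.
  by rewrite deltaE eqxx.
by move=> j /negbTE ji; rewrite deltaE ji /= mulr0.
Qed.

Lemma LfR C a c m q : Lf C (rDJ R n) a c m q =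
  (a < c)%N%:R * C c m * C a q + 2^-1 * ((c == a)%:R * C a m * C a q - n%:R^-1 * (C a m * C c q)).
Proof.
rewrite /rDJ /Omega0 Lf_add Lf_scale Lf_sub Lf_scale Lf_tens !mul1mx; congr (_ + _ * (_ - _)).
  rewrite Lf_sumP.
  transitivity (\sum_(i < n) (a == i)%:R * ((i < c)%N%:R * C c m * C i q)).
    apply: eq_bigr => i _; rewrite Lf_sumP.
    transitivity (\sum_(k < n | (i < k)%N) (c == k)%:R * ((a == i)%:R * C k m * C i q)).
      by apply: eq_bigr => k _; rewrite Lf_tens !dmul; ring.
    by rewrite sum_delta; ring.
  by rewrite (sum_delta (fun i => (i < c)%N%:R * C c m * C i q) a predT) /=; ring.
rewrite Lf_sumP.
transitivity (\sum_(i < n) (a == i)%:R * ((c == i)%:R * C i m * C i q)).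
  by apply: eq_bigr => i _; rewrite Lf_tens !dmul; ring.
rewrite (sum_delta (fun i => (c == i)%:R * C i m * C i q) a predT) /=; ring.
Qed.

Lemma RfR C a c m q : Rf C (rDJ R n) a c m q =
  (q < m)%N%:R * C a q * C c m + 2^-1 * (C a m * C c m * (q == m)%:R - n%:R^-1 * (C a m * C c q)).
Proof.
rewrite /rDJ /Omega0 Rf_add Rf_scale Rf_sub Rf_scale Rf_tens !mulmx1; congr (_ + _ * (_ - _)).
  rewrite Rf_sumP.
  transitivity (\sum_(i < n) (q == i)%:R * ((i < m)%N%:R * C a i * C c m)).
    apply: eq_bigr => i _; rewrite Rf_sumP.
    transitivity (\sum_(k < n | (i < k)%N) (m == k)%:R * (C a i * C c k * (q == i)%:R)).
      by apply: eq_bigr => k _; rewrite Rf_tens !muld; ring.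
    by rewrite (sum_delta (fun k => C a i * C c k * (q == i)%:R)); ring.
  by rewrite (sum_delta (fun i => (i < m)%N%:R * C a i * C c m) q predT) /=; ring.
rewrite Rf_sumP.
transitivity (\sum_(i < n) (m == i)%:R * (C a i * C c i * (q == i)%:R)).
  by apply: eq_bigr => i _; rewrite Rf_tens !muld; ring.
rewrite (sum_delta (fun i => C a i * C c i * (q == i)%:R) m predT) /=; ring.
Qed.

Lemma inc_id (f : 'I_n -> 'I_n) : (forall i j : 'I_n, (i < j)%N -> (f i < f j)%N) ->
  forall i, f i = i.
Proof.
case: n f => [|n'] f finc i; first by case: i.
pose g k := val (f (inord k)).
have gi : forall k, (k < n'.+1)%N -> forall k', (k' < n'.+1)%N -> (k < k')%N -> (g k < g k')%N.
  by move=> k hk k' hk' kk; apply: finc; rewrite !inordK.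
have gb : forall k, (g k < n'.+1)%N by move=> k; apply: ltn_ord.
have A : forall k, (k < n'.+1)%N -> (k <= g k)%N.
  elim => [|k IH] hk //; have := IH (ltnW hk); have := gi k (ltnW hk) k.+1 hk (ltnSn k); lia.
have B : forall j k, (k + j = n')%N -> (g k <= k)%N.
  elim => [|j IH] k e; first by have := gb k; lia.
  have := IH k.+1 ltac:(lia); have := gi k ltac:(lia) k.+1 ltac:(lia) (ltnSn k); lia.
apply: val_inj => /=; have e : g i = f i by rewrite /g inord_val.
have := A i (ltn_ord i); have := B (n' - i)%N i ltac:(have := ltn_ord i; lia); lia.
Qed.

End R.

Section R.
Variables (R : fieldType) (n : nat) (two : 2%:R != 0 :> R).
Implicit Types (C : 'M[R]_n).

Lemma half_lem (b : bool) (x : R) : b%:R * x = 2^-1 * x -> x = 0.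
Proof.
case: b => /=; rewrite ?mul1r ?mul0r => e.
  have e2 : x * 2%:R = x by rewrite {1}e mulrAC mulVf // mul1r.
  move: e2; rewrite mulr_natr mulr2n -{3}[x]addr0 => /addrI //.
by move/eqP: e; rewrite eq_sym mulf_eq0 invr_eq0 (negbTE two) /= => /eqP.
Qed.

Lemma Eid C : inC (rDJ R n) C -> forall a c m q : 'I_n,
  (a < c)%N%:R * C c m * C a q + 2^-1 * ((c == a)%:R * C a m * C a q) =
  (q < m)%N%:R * C a q * C c m + 2^-1 * (C a m * C c m * (q == m)%:R).
Proof.
move=> [Cu hC] a c m q; have H := (inC_iff _ Cu).1 hC a c m q.
apply/eqP; rewrite -subr_eq0; apply/eqP.
transitivity (Lf C (rDJ R n) a c m q - Rf C (rDJ R n) a c m q).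
  by rewrite LfR RfR; ring.
by rewrite H subrr.
Qed.

Lemma inC_diag C : inC (rDJ R n) C -> forall a q : 'I_n, a != q -> C a q = 0.
Proof.
move=> hC; have E := Eid hC; have Cu := hC.1.
have col : forall a c m : 'I_n, a != c -> C a m * C c m = 0.
  move=> a c m ac; have := E a c m m; rewrite ltnn eq_sym (negbTE ac) eqxx /= !mul0r mulr0 !addr0 add0r mulr1.
  by move=> e; apply: (@half_lem (a < c)%N); rewrite -e; ring.
have row : forall a m q : 'I_n, q != m -> C a m * C a q = 0.
  move=> a m q qm; have := E a a m q; rewrite ltnn eqxx (negbTE qm) /=.
  move=> e; apply: (@half_lem (q < m)%N); symmetry; transitivity (0 * C a m * C a q + 2^-1 * (1 * C a m * C a q)); first ring. by rewrite e; ring.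
have cross : forall a c m q : 'I_n, (c < a)%N -> (q < m)%N -> C a q * C c m = 0.
  move=> a c m q ca qm; have := E a c m q.
  have ac : (a < c)%N = false by apply/negbTE; rewrite -leqNgt ltnW.
  have ca' : (c == a) = false by apply/negbTE; rewrite neq_ltn ca.
  have qm' : (q == m) = false by apply/negbTE; rewrite neq_ltn qm.
  by rewrite ac ca' qm' qm /= !mul0r !mulr0 !addr0 mul1r => <-.
have colnz : forall q : 'I_n, exists a, C a q != 0.
  move=> q; apply/existsP; apply/negP => /existsP h.
  have : (invmx C *m C) q q = 0.
    rewrite mxE big1 // => j _; case: (eqVneq (C j q) 0) => [->|nz]; first by rewrite mulr0.
    by exfalso; apply: h; exists j.
  by rewrite mulVmx // mxE eqxx /= => /eqP; rewrite oner_eq0.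
pose pi q := odflt q [pick a | C a q != 0].
have piP : forall q, C (pi q) q != 0.
  move=> q; rewrite /pi; case: pickP => //= h; have [a ha] := colnz q.
  by move: (h a); rewrite ha.
have uniq_col : forall a q, C a q != 0 -> a = pi q.
  move=> a q nz; apply/eqP; apply/negP => /negP ne.
  by move: (col a (pi q) q ne) => /eqP; rewrite mulf_eq0 (negbTE nz) (negbTE (piP q)).
have inc : forall q m : 'I_n, (q < m)%N -> (pi q < pi m)%N.
  move=> q m qm; rewrite ltn_neqAle; apply/andP; split.
    apply/negP => /eqP /val_inj e.
    have qm' : q != m by rewrite neq_ltn qm.
    move: (row (pi q) m q qm'); rewrite {1}e => /eqP.
    by rewrite mulf_eq0 (negbTE (piP m)) (negbTE (piP q)).
  rewrite leqNgt; apply/negP => lt.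
  move: (cross (pi q) (pi m) m q lt qm) => /eqP.
  by rewrite mulf_eq0 (negbTE (piP m)) (negbTE (piP q)).
have pid := inc_id inc.
move=> a q aq; apply/eqP; apply/negP => /negP nz.
by move: aq; rewrite (uniq_col a q nz) pid eqxx.
Qed.

Lemma diag_inC (d : 'rV[R]_n) : (forall i, d 0 i != 0) -> inC (rDJ R n) (diag_mx d).
Proof.
move=> dnz; set D := diag_mx d.
have Du : D \in unitmx.
  by rewrite unitmxE det_diag unitfE; apply/prodf_neq0 => i _.
split => //; apply/(inC_iff _ Du) => a c m q; rewrite LfR RfR.
have D0 : forall x y : 'I_n, x != y -> D x y = 0.
  by move=> x y xy; rewrite mxE (negbTE xy) mulr0n.
have t1 : (a < c)%N%:R * D c m * D a q = (q < m)%N%:R * D a q * D c m.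
  case: (eqVneq c m) => [<-|cm]; last by rewrite (D0 c m) // !(mulr0, mul0r).
  case: (eqVneq a q) => [<-|aq]; last by rewrite (D0 a q) // !(mulr0, mul0r).
  by rewrite mulrAC.
have t2 : (c == a)%:R * D a m * D a q = D a m * D c m * (q == m)%:R.
  case: (eqVneq a m) => [<-|am]; last by rewrite (D0 a m) // !(mulr0, mul0r).
  case: (eqVneq a q) => [<-|aq]; last by rewrite (D0 a q) // /= !(mulr0, mul0r).
  case: (eqVneq c a) => [->|ca]; first by rewrite /=; ring.
  by rewrite (D0 c a) // !(mulr0, mul0r).
by rewrite t1 t2.
Qed.
End R.

Lemma colnz {R : fieldType} {n : nat} (C : 'M[R]_n) : C \in unitmx ->
  forall q, exists a, C a q != 0.
Proof.
move=> Cu q; apply/existsP; apply/negP => /existsP h.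
have : (invmx C *m C) q q = 0.
  rewrite mxE big1 // => j _; case: (eqVneq (C j q) 0) => [->|nz]; first by rewrite mulr0.
  by exfalso; apply: h; exists j.
by rewrite mulVmx // mxE eqxx /= => /eqP; rewrite oner_eq0.
Qed.

Unset Implicit Arguments.
Theorem mainTheorem6 (L : closedFieldType) (K : {pred L}) (n : nat)
  (K_field : GRing.divring_closed K)
  (L_char0 : [pchar L] =i pred0)
  (L_alg : algebraic_over K)
  (X : 'M[L]_n)
  (X_GL : X \in unitmx)
  (X_cocycle : forall s : {rmorphism L -> L}, inGal K s ->
       inC (rDJ L n) (invmx X *m map_mx s X)) :
  exists Q C : 'M[L]_n, [/\ inGLK K Q, inC (rDJ L n) C & X = Q *m C].
Proof.
have two : 2%:R != 0 :> L by rewrite ((pcharf0P _).1 L_char0).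
pose piv j := odflt j [pick i | X i j != 0].
have pivP : forall j, X (piv j) j != 0.
  move=> j; rewrite /piv; case: pickP => //= h; have [a ha] := @colnz _ _ X X_GL j.
  by move: (h a); rewrite ha.
pose d := \row_j X (piv j) j.
have dnz : forall j, d 0 j != 0 by move=> j; rewrite mxE.
pose Q := \matrix_(i, j) (X i j / X (piv j) j).
have eX : X = Q *m diag_mx d.
  by apply/matrixP => i j; rewrite mul_mx_diag !mxE divfK.
have hC := diag_inC dnz.
exists Q, (diag_mx d); split => //.
split.
  have -> : Q = X *m invmx (diag_mx d) by rewrite eX mulmxK //; case: hC.
  by rewrite unitmx_mul X_GL unitmx_inv; case: hC.
move=> i j; apply: (FIX K_field L_char0 L_alg) => s hs.
have [Mu hM] := X_cocycle s hs.
set M := invmx X *m map_mx s X.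
have Mdiag := inC_diag two (conj Mu hM).
have eM : forall a b, s (X a b) = X a b * M b b.
  move=> a b; have eMX : map_mx s X = X *m M by rewrite /M mulKVmx.
  have -> : s (X a b) = (X *m M) a b by rewrite -eMX mxE.
  rewrite mxE (bigD1 b) //= big1 ?addr0 // => k kb; rewrite Mdiag ?mulr0 //.
have Mnz : forall b, M b b != 0.
  move=> b; have [a ha] := @colnz _ _ M Mu b.
  case: (eqVneq a b) => [ab|ab]; first by move: ha; rewrite ab.
  by move: ha; rewrite (Mdiag a b ab) eqxx.
rewrite !mxE fmorph_div !eM; field.
by rewrite pivP Mnz.
Qed.
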